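(* Let $b_0,b_1,\ldots,b_p\in\mathbb R^n$ and $-\infty\le l_i\le u_i\le+\infty$ for $i=1,\ldots,p$. Consider \[ {\rm (U)}\quad \max_{x\in\mathbb R^n}\ x^Tx+b_0^Tx\quad \text{s.t.}\quad l_i\le x^Tx+2b_i^Tx\le u_i,\ i=1,\ldots,p, \] and the second-order cone programming relaxation \[ {\rm (S)}\quad \max_{x\in\mathbb R^n,\,t\in\mathbb R}\ t+b_0^Tx\quad \text{s.t.}\quad l_i\le t+2b_i^Tx\le u_i,\ i=1,\ldots,p,\qquad \left\|\begin{pmatrix} x\\ \frac{t-1}{2}\end{pmatrix}\right\|\le \frac{t+1}{2}. \] Suppose that either ${\rm rank}[b_1,\ldots,b_p]\le n-1$ or $p=n$. Then (U) is equivalent to (S), in the sense that $x^*$ globally solves (U) if and only if $(x^*,t^* ):=(x^*,x^{*T}x^* )$ globally solves (S).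
   Context: $\|\cdot\|$ is the Euclidean norm. *)

(* Defs.v *)
From HB Require Import structures.
From mathcomp Require Import all_boot all_order all_algebra.
From mathcomp Require Import reals constructive_ereal.
Set Implicit Arguments. Unset Strict Implicit. Unset Printing Implicit Defensive.
Import Order.TTheory GRing.Theory Num.Theory.
Local Open Scope ring_scope.

Definition dotv (R : realType) (n : nat) (x y : 'cV[R]_n) : R :=
  \sum_(k < n) x k 0 * y k 0.

Definition colmat (R : realType) (n p : nat) (b : 'I_p -> 'cV[R]_n) : 'M[R]_(n, p) :=
  \matrix_(k < n, i < p) b i k 0.

Definition in_eint (R : realType) (l u : \bar R) (v : R) : Prop :=
  (l <= v%:E)%E /\ (v%:E <= u)%E.

Definition feasU (R : realType) (n p : nat) (b : 'I_p -> 'cV[R]_n)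
  (l u : 'I_p -> \bar R) (x : 'cV[R]_n) : Prop :=
  forall i : 'I_p, in_eint (l i) (u i) (dotv x x + 2 * dotv (b i) x).

Definition objU (R : realType) (n : nat) (b0 x : 'cV[R]_n) : R :=
  dotv x x + dotv b0 x.

Definition solvesU (R : realType) (n p : nat) (b0 : 'cV[R]_n) (b : 'I_p -> 'cV[R]_n)
  (l u : 'I_p -> \bar R) (x : 'cV[R]_n) : Prop :=
  feasU b l u x /\ forall y, feasU b l u y -> objU b0 y <= objU b0 x.

(* feasibility for the SOCP relaxation (S):
   || (x ; (t-1)/2) || <= (t+1)/2, Euclidean norm in R^(n+1) *)
Definition feasS (R : realType) (n p : nat) (b : 'I_p -> 'cV[R]_n)
  (l u : 'I_p -> \bar R) (x : 'cV[R]_n) (t : R) : Prop :=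
  (forall i : 'I_p, in_eint (l i) (u i) (t + 2 * dotv (b i) x)) /\
  Num.sqrt (dotv x x + ((t - 1) / 2) ^+ 2) <= (t + 1) / 2.

Definition objS (R : realType) (n : nat) (b0 x : 'cV[R]_n) (t : R) : R :=
  t + dotv b0 x.

Definition solvesS (R : realType) (n p : nat) (b0 : 'cV[R]_n) (b : 'I_p -> 'cV[R]_n)
  (l u : 'I_p -> \bar R) (x : 'cV[R]_n) (t : R) : Prop :=
  feasS b l u x t /\
  forall y s, feasS b l u y s -> objS b0 y s <= objS b0 x t.

(* Main.v *)
Require Import Defs.
From HB Require Import structures.
From mathcomp Require Import all_boot all_order all_algebra.
From mathcomp Require Import reals constructive_ereal.
From mathcomp Require Import ring lra.
Import Order.TTheory GRing.Theory Num.Theory.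
Local Open Scope ring_scope.

Section Aux.
Variable R : realType.
Variable n : nat.
Implicit Types x y d : 'cV[R]_n.

Lemma dotvC x y : dotv x y = dotv y x.
Proof. by apply: eq_bigr => k _; rewrite mulrC. Qed.

Lemma dotvDl x y z : dotv (x + y) z = dotv x z + dotv y z.
Proof. by rewrite /dotv -big_split; apply: eq_bigr => k _; rewrite !mxE mulrDl. Qed.

Lemma dotvZl (a : R) x z : dotv (a *: x) z = a * dotv x z.
Proof. by rewrite /dotv mulr_sumr; apply: eq_bigr => k _; rewrite !mxE mulrA. Qed.

Lemma dotvDr x y z : dotv z (x + y) = dotv z x + dotv z y.
Proof. by rewrite dotvC dotvDl !(dotvC z). Qed.

Lemma dotvZr (a : R) x z : dotv z (a *: x) = a * dotv z x.
Proof. by rewrite dotvC dotvZl dotvC. Qed.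

Lemma dotv_ge0 x : 0 <= dotv x x.
Proof. by apply: sumr_ge0 => k _; rewrite -expr2 sqr_ge0. Qed.

Lemma dotv_gt0 x k : x k 0 != 0 -> 0 < dotv x x.
Proof.
move=> hk; rewrite /dotv (bigD1 k) //=.
have h2 : 0 <= \sum_(i < n | i != k) x i 0 * x i 0.
  by apply: sumr_ge0 => j _; rewrite -expr2 sqr_ge0.
have h1 : 0 < x k 0 * x k 0 by rewrite -expr2 exprn_even_gt0.
lra.
Qed.

End Aux.
Arguments dotv_ge0 {R n}.
Arguments dotv_gt0 {R n x k}.

Lemma socp_iff (R : realType) (a t : R) : 0 <= a ->
  (Num.sqrt (a + ((t - 1) / 2) ^+ 2) <= (t + 1) / 2) <-> a <= t.
Proof.
move=> ha; split.
  move=> h.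
  have h0 : 0 <= (t + 1) / 2 := le_trans (sqrtr_ge0 _) h.
  have hp : 0 <= a + ((t - 1) / 2) ^+ 2 by rewrite addr_ge0 // sqr_ge0.
  have : Num.sqrt (a + ((t - 1) / 2) ^+ 2) ^+ 2 <= ((t + 1) / 2) ^+ 2.
    by rewrite ler_sqr // ?nnegrE ?sqrtr_ge0.
  rewrite sqr_sqrtr //; nra.
move=> h.
have h0 : 0 <= (t + 1) / 2 by lra.
rewrite -(ger0_norm h0) -sqrtr_sqr ler_sqrt ?sqr_ge0 //; nra.
Qed.

Arguments socp_iff {R a t}.

Lemma quad_root (R : realType) (a be c g : R) : 0 < a -> c <= 0 ->
  exists lam, a * lam ^+ 2 + 2 * be * lam + c = 0 /\ 0 <= lam * g.
Proof.
move=> ha hc.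
have hD : 0 <= be ^+ 2 - a * c by nra.
set s := Num.sqrt (be ^+ 2 - a * c).
have hs2 : s ^+ 2 = be ^+ 2 - a * c by rewrite sqr_sqrtr.
have hs0 : 0 <= s by rewrite sqrtr_ge0.
have hsb : `|be| <= s.
  by rewrite -ler_sqr ?nnegrE // real_normK ?num_real // hs2; nra.
have [hb1 hb2] : be <= s /\ - be <= s.
  by split; apply: le_trans hsb; rewrite ?ler_norm ?ler_normr ?lexx ?orbT.
have ha0 : a != 0 by rewrite gt_eqF.
case: (lerP 0 g) => hg.
  exists ((- be + s) / a); split.
    apply: (mulfI ha0); rewrite mulr0.
    have -> : a * (a * ((- be + s) / a) ^+ 2 + 2 * be * ((- be + s) / a) + c)
      = (s ^+ 2 - be ^+ 2) + a * c by field.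
    by rewrite hs2; ring.
  apply: mulr_ge0 => //; apply: divr_ge0; lra.
exists ((- be - s) / a); split.
  apply: (mulfI ha0); rewrite mulr0.
  have -> : a * (a * ((- be - s) / a) ^+ 2 + 2 * be * ((- be - s) / a) + c)
    = (s ^+ 2 - be ^+ 2) + a * c by field.
  by rewrite hs2; ring.
apply: mulr_le0 => //; last by apply: ltW.
rewrite mulr_le0_ge0 //; [lra | by rewrite invr_ge0 ltW].
Qed.


Arguments quad_root {R a} be {c} g.

Lemma mx_nz (R : realType) m k (M : 'M[R]_(m, k)) : M != 0 ->
  exists i j, M i j != 0.
Proof.
move=> hM; case: (pickP (fun ij : 'I_m * 'I_k => M ij.1 ij.2 != 0)).
  by move=> [i j] h; exists i, j.
move=> h; case/eqP: hM; apply/matrixP => i j.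
by move: (h (i, j)); rewrite mxE /= => /negbFE/eqP.
Qed.

Lemma dir_exists (R : realType) (n p : nat) (b : 'I_p -> 'cV[R]_n)
  (hn : (0 < n)%N)
  (hrank : (\rank (colmat b) <= n.-1)%N \/ p = n) :
  exists d : 'cV[R]_n, (exists k, d k 0 != 0) /\
    exists kap : R, forall i, dotv (b i) d = kap.
Proof.
set A := colmat b.
suff [r [hr [kap hk]]] : exists r : 'rV[R]_n, r != 0 /\
    exists kap : R, r *m A = const_mx kap.
  have [i [k hik]] := @mx_nz _ _ _ r hr.
  exists r^T; split; first by exists k; rewrite mxE -(ord1 i).
  exists kap => j; have := congr1 (fun M : 'M[R]_(1, p) => M 0 j) hk.
  rewrite !mxE => <-; apply: eq_bigr => l _.
  by rewrite !mxE mulrC.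
case: (ltnP (\rank A) n) => hrk.
  have hK : kermx A != 0.
    by rewrite kermx_eq0 /row_free neq_ltn hrk.
  have [i [j hij]] := @mx_nz _ _ _ (kermx A) hK.
  exists (row i (kermx A)); split.
    apply/eqP => /matrixP /(_ 0 j); rewrite mxE => h0; by move: hij; rewrite h0 mxE eqxx.
  by exists 0; rewrite -row_mul mulmx_ker; apply/matrixP => x y; rewrite !mxE.
have hpn : p = n.
  case: hrank => // h; exfalso.
  by move: (leq_trans hrk h); rewrite leqNgt ltn_predL hn.
have hfull : row_full A.
  have hpn2 : (p <= n)%N by rewrite hpn.
  by rewrite /row_full eqn_leq rank_leq_col (leq_trans hpn2 hrk).
exists (const_mx 1 *m pinvmx A); split; last first.
  by exists 1; rewrite mulmxKpV // submx_full.
apply/eqP => h0.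
have := mulmxKpV (submx_full (const_mx (1 : R) : 'rV_p) hfull).
rewrite h0 mul0mx => /matrixP.
have hp : (0 < p)%N by rewrite hpn.
move=> /(_ 0 (Ordinal hp)); rewrite !mxE => /eqP.
by rewrite eq_sym oner_eq0.
Qed.

Arguments dir_exists {R n p}.

Theorem theorem1 (R : realType) (n p : nat) (b0 : 'cV[R]_n)
  (b : 'I_p -> 'cV[R]_n) (l u : 'I_p -> \bar R)
  (hn : (0 < n)%N)
  (hlu : forall i : 'I_p, (l i <= u i)%E)
  (hrank : (\rank (colmat b) <= n.-1)%N \/ p = n) :
  forall x : 'cV[R]_n, solvesU b0 b l u x <-> solvesS b0 b l u x (dotv x x).
Proof.
move=> x; split; last first.
  move=> [[hc _] hopt]; split; first by [].
  move=> y hy; have := hopt y (dotv y y).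
  rewrite /objS /objU; apply; split; first by [].
  by apply: (proj2 (socp_iff (dotv_ge0 y))).

move=> [hfx hopt]; split.
  by split; [exact: hfx | apply: (proj2 (socp_iff (dotv_ge0 x)))].
move=> y s [hc hsoc].
have hys : dotv y y <= s by apply: (proj1 (socp_iff (dotv_ge0 y))).

have [d [[k hk] [kap hkap]]] := dir_exists b hn hrank.
have hc0 : dotv y y - s <= 0 by lra.
have [lam [hroot hsign]] := quad_root (dotv y d + kap) (dotv b0 d - 2 * kap)
  (dotv_gt0 hk) hc0.
set z := y + lam *: d.
have hzz : dotv z z = dotv y y + 2 * lam * dotv y d + lam ^+ 2 * dotv d d.
  rewrite /z !dotvDl !dotvDr !dotvZl !dotvZr (@dotvC _ _ d y); ring.
have hbz i : dotv (b i) z = dotv (b i) y + lam * kap.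
  by rewrite /z dotvDr dotvZr hkap.
have hb0z : dotv b0 z = dotv b0 y + lam * dotv b0 d.
  by rewrite /z dotvDr dotvZr.
have hfz : feasU b l u z.
  move=> i; have -> : dotv z z + 2 * dotv (b i) z = s + 2 * dotv (b i) y.
    rewrite hzz hbz; move: hroot; rewrite (mulrC (dotv d d)); lra.
  exact: hc.
apply: le_trans (hopt z hfz).
rewrite /objS /objU hb0z hzz.
move: hroot hsign; rewrite (mulrC (dotv d d)); nra.
Qed.
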